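(* Let $\mathcal{A}$ be a finite alphabet with $\#\mathcal{A}\ge 2$ and let $\mathbf{p}$ be an irreducible pair on $\mathcal{A}$. Then the labeled Rauzy class of $\mathbf{p}$ contains a piece-wise order reversing pair.
   Context: Let $n=\#\mathcal{A}$. A pair on $\mathcal{A}$ is $\mathbf{p}=(p_0,p_1)$ with $p_0,p_1:\mathcal{A}\to\{1,\dots,n\}$ bijections ($p_\varepsilon$ is ''row $\varepsilon$''; row $\varepsilon$ lists the letters $p_\varepsilon^{-1}(1),\dots,p_\varepsilon^{-1}(n)$ in order). $\mathbf{p}$ is irreducible if $p_0^{-1}\{1,\dots,k\}\neq p_1^{-1}\{1,\dots,k\}$ for every $1\le k<n$. For irreducible $\mathbf{p}$ and $\varepsilon\in\{0,1\}$, the Rauzy move of type $\varepsilon$ gives $\varepsilon\mathbf{p}=(p_0',p_1')$ with $p'_\varepsilon=p_\varepsilon$ and, writing $z=p_\varepsilon^{-1}(n)$: $p'_{1-\varepsilon}(b)=p_{1-\varepsilon}(b)$ if $p_{1-\varepsilon}(b)\le p_{1-\varepsilon}(z)$; $p'_{1-\varepsilon}(b)=p_{1-\varepsilon}(b)+1$ if $p_{1-\varepsilon}(z)<p_{1-\varepsilon}(b)<n$; $p'_{1-\varepsilon}(b)=p_{1-\varepsilon}(z)+1$ if $p_{1-\varepsilon}(b)=n$. These moves are bijections of the set of irreducible pairs. The labeled Rauzy class of $\mathbf{p}$ is the smallest set of irreducible pairs containing $\mathbf{p}$ and closed under both Rauzy moves (equivalently, the set of pairs reachable from $\mathbf{p}$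 by sequences of Rauzy moves). A pair is standard if $p_0^{-1}(1)=p_1^{-1}(n)$ and $p_1^{-1}(1)=p_0^{-1}(n)$. A standard pair $\mathbf{p}$ is piece-wise order reversing if there are integers $2=k_0<k_1<\dots<k_\ell=n$ such that for each $1\le i\le\ell$, $p_0^{-1}\{k_{i-1},\dots,k_i-1\}=p_1^{-1}\{k_{i-1},\dots,k_i-1\}$, and every $b$ with $k_{i-1}\le p_0(b)<k_i$ satisfies $p_0(b)+p_1(b)=k_{i-1}+k_i-1$. *)

(* Defs.v *)
From mathcomp Require Import all_boot.
Set Implicit Arguments. Unset Strict Implicit. Unset Printing Implicit Defensive.

Section Rauzy.
Variable A : finType.

(* A pair on A: two rows p_0, p_1 : A -> nat, positions are 1..n with n = #|A|. *)
Definition pairT := ((A -> nat) * (A -> nat))%type.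

Definition row (p : pairT) (e : bool) : A -> nat := if e then p.2 else p.1.

Definition is_bij (f : A -> nat) : Prop :=
  [/\ forall a, 1 <= f a <= #|A|,
      injective f &
      forall k, 1 <= k <= #|A| -> exists a, f a = k].

Definition is_pair (p : pairT) : Prop := is_bij p.1 /\ is_bij p.2.

Definition irreducible (p : pairT) : Prop :=
  is_pair p /\
  forall k, 1 <= k < #|A| ->
    [set a | 1 <= p.1 a <= k] != [set a | 1 <= p.2 a <= k].

Definition last_letter (p : pairT) (e : bool) : option A :=
  [pick a | row p e a == #|A|].

Definition rauzy_row (p : pairT) (e : bool) : A -> nat :=
  let q := row p (~~ e) in
  match last_letter p e with
  | None => q
  | Some z =>
      fun b => if q b <= q z then q b
               else if q b < #|A| then (q b).+1
               else (q z).+1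
  end.

(* Rauzy move of type e: e = false is type 0, e = true is type 1 *)
Definition rauzy (e : bool) (p : pairT) : pairT :=
  if e then (rauzy_row p true, p.2) else (p.1, rauzy_row p false).

Inductive in_rauzy_class (p : pairT) : pairT -> Prop :=
  | rc_refl : in_rauzy_class p p
  | rc_step q e : in_rauzy_class p q -> irreducible q ->
                  in_rauzy_class p (rauzy e q).

Definition standard (p : pairT) : Prop :=
  (exists a, p.1 a = 1 /\ p.2 a = #|A|) /\
  (exists b, p.2 b = 1 /\ p.1 b = #|A|).

(* piece-wise order reversing: integers 2 = k_0 < k_1 < ... < k_l = n,
   encoded as the list 2 :: ks *)
Definition pw_order_reversing (p : pairT) : Prop :=
  standard p /\
  exists ks : seq nat,
    [/\ path ltn 2 ks, last 2 ks = #|A| &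
        forall i, i < size ks ->
          let a := nth 0 (2 :: ks) i in
          let b := nth 0 ks i in
          [set x | a <= p.1 x < b] = [set x | a <= p.2 x < b] /\
          (forall x, a <= p.1 x < b -> p.1 x + p.2 x = a + b - 1)].

End Rauzy.

(* Main.v *)
Require Import Defs.
From mathcomp Require Import all_boot zify.
From Stdlib Require Import FunctionalExtensionality.
Set Implicit Arguments. Unset Strict Implicit. Unset Printing Implicit Defensive.


Lemma mem_split_ex (T : eqType) (x : T) (s : seq T) :
  x \in s -> exists s1 s2, s = s1 ++ x :: s2.
Proof. by case/splitPr=> s1 s2; exists s1, s2. Qed.

Definition Sstep {T : eqType} (x y : seq T * seq T) : Prop :=
  exists X1 Y1 R1 X2 Y2 R2 (w v : T),
    x = (rcons X1 w ++ rcons Y1 v ++ R1, rcons X2 w ++ rcons Y2 v ++ R2) /\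
    y = (rcons Y1 v ++ rcons X1 w ++ R1, rcons Y2 v ++ rcons X2 w ++ R2).

Inductive Sreach {T : eqType} (x : seq T * seq T) : seq T * seq T -> Prop :=
| Sr_refl : Sreach x x
| Sr_step y z : Sreach x y -> Sstep y z -> Sreach x z.

Lemma Sreach_trans (T : eqType) (x y z : seq T * seq T) :
  Sreach x y -> Sreach y z -> Sreach x z.
Proof.
move=> Hxy; elim=> [|u v _ IH Huv] //; exact: Sr_step IH Huv.
Qed.

Lemma Sreach1 (T : eqType) (x y : seq T * seq T) : Sstep x y -> Sreach x y.
Proof. by move=> H; apply: Sr_step (Sr_refl _) H. Qed.

Inductive layered {T : eqType} : seq T -> seq T -> Prop :=
| lay_nil : layered [::] [::]
| lay_snoc t b V : layered t b -> V != [::] -> layered (t ++ V) (b ++ rev V).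

Lemma layered_perm (T : eqType) (t b : seq T) : layered t b -> perm_eq t b.
Proof.
elim=> // t0 b0 V _ IH _.
by rewrite (perm_cat IH) // perm_sym perm_rev.
Qed.

Lemma Sstep_perm (T : eqType) t b t' b' :
  @Sstep T (t, b) (t', b') -> perm_eq t t' /\ perm_eq b b'.
Proof.
case=> [X1 [Y1 [R1 [X2 [Y2 [R2 [w [v [[-> ->] [-> ->]]]]]]]]]].
by rewrite !catA !perm_cat2r; split; rewrite perm_catC.
Qed.

Lemma Sreach_perm (T : eqType) t b t' b' :
  @Sreach T (t, b) (t', b') -> perm_eq t t' /\ perm_eq b b'.
Proof.
move Ex : (t, b) => x; move Ey : (t', b') => y H.
elim: H t' b' Ey => [|[t1 b1] [t2 b2] _ IH Hs] t' b' Ey.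
  by subst; case: Ey => -> ->.
case: Ey => E1 E2; subst; case: (IH t1 b1 erefl) => H1 H2.
case: (Sstep_perm Hs) => H3 H4.
split; [exact: perm_trans H1 H3 | exact: perm_trans H2 H4].
Qed.

Lemma Sstep_suffix (T : eqType) t b t' b' V W :
  @Sstep T (t, b) (t', b') -> Sstep (t ++ V, b ++ W) (t' ++ V, b' ++ W).
Proof.
case=> [X1 [Y1 [R1 [X2 [Y2 [R2 [w [v [[-> ->] [-> ->]]]]]]]]]].
exists X1, Y1, (R1 ++ V), X2, Y2, (R2 ++ W), w, v.
by rewrite -!catA.
Qed.

Lemma Sreach_suffix (T : eqType) t b t' b' V W :
  @Sreach T (t, b) (t', b') -> Sreach (t ++ V, b ++ W) (t' ++ V, b' ++ W).
Proof.
move Ex : (t, b) => x; move Ey : (t', b') => y H.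
elim: H t' b' Ey => [|[t1 b1] [t2 b2] _ IH Hs] t' b' Ey.
  by subst; case: Ey => -> ->; apply: Sr_refl.
case: Ey => E1 E2; subst; apply: Sr_step (IH t1 b1 erefl) _.
exact: Sstep_suffix.
Qed.

Lemma filter_split_rcons (T : eqType) (p : pred T) (s u v : seq T) (w : T) :
  p w -> filter p s = rcons u w ++ v ->
  exists s1 s2, s = rcons s1 w ++ s2 /\ filter p s1 = u /\ filter p s2 = v.
Proof.
move=> pw; elim: s u => [|a s IH] u /=; first by case: u.
case: ifP => pa.
  case: u => [|a' u] /=; case=> <-.
    by move=> <-; exists [::], s.
  move=> /IH [s1 [s2 [-> [H1 H2]]]].
  by exists (a :: s1), s2; rewrite /= pa H1.
move=> /IH [s1 [s2 [-> [H1 H2]]]].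
by exists (a :: s1), s2; rewrite /= pa H1.
Qed.

Lemma Sstep_lift_del (T : eqType) (x : T) fs bs fs' bs' t :
  Sstep (fs, bs) (fs', bs') -> filter (predC1 x) t = fs -> x \notin bs ->
  exists t', filter (predC1 x) t' = fs' /\ Sstep (t, bs ++ [:: x]) (t', bs' ++ [:: x]).
Proof.
case=> [X1 [Y1 [R1 [X2 [Y2 [R2 [w [v [[-> ->] [-> ->]]]]]]]]]] Hf Hx.
have pw : predC1 x w.
  by apply/eqP=> Ew; move: Hx; rewrite Ew mem_cat mem_rcons inE eqxx.
have pv : predC1 x v.
  by apply/eqP=> Ev; move: Hx; rewrite Ev !mem_cat !mem_rcons !inE eqxx orbT.
case: (filter_split_rcons pw Hf) => t1 [t2 [Et [H1 H2]]].
case: (filter_split_rcons pv H2) => t3 [t4 [Et2 [H3 H4]]].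
exists (rcons t3 v ++ rcons t1 w ++ t4); split.
  by rewrite !filter_cat !filter_rcons pv pw H1 H3 H4.
exists t1, t3, t4, X2, Y2, (R2 ++ [:: x]), w, v.
by rewrite Et Et2 -!catA.
Qed.

Lemma Sreach_lift_del (T : eqType) (x : T) fs bs fs' bs' t :
  Sreach (fs, bs) (fs', bs') -> filter (predC1 x) t = fs -> x \notin bs ->
  exists t', filter (predC1 x) t' = fs' /\ Sreach (t, bs ++ [:: x]) (t', bs' ++ [:: x]).
Proof.
move=> H Hf Hx; move: H.
move Ex : (fs, bs) => x0; move Ey : (fs', bs') => y H.
elim: H fs' bs' Ey => [|[t1 b1] [t2 b2] H0 IH Hs] fs' bs' Ey.
  subst; case: Ey => E1 E2; subst; exists t; split=> //; apply: Sr_refl.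
case: Ey => E1 E2; subst; case: (IH t1 b1 erefl) => t' [Ht' Hr].
have Hx1 : x \notin b1.
  by case: (Sreach_perm H0) => _ /perm_mem <-.
case: (Sstep_lift_del Hs Ht' Hx1) => t'' [H1 H2].
by exists t''; split=> //; apply: Sr_step Hr H2.
Qed.


Ltac lnorm := rewrite ?rev_cons ?rev_rcons ?rev_cat -?cats1 -?catA /= ?rev_cons ?rev_rcons ?rev_cat -?cats1 -?catA /= ?cats0.

Lemma cat_eq_suffix (T : eqType) (s1 s2 t1 t2 : seq T) :
  s1 ++ s2 = t1 ++ t2 -> size s2 = size t2 -> s1 = t1 /\ s2 = t2.
Proof.
move=> E Hs; have Hs1 : size s1 = size t1.
  by move/(congr1 size): E; rewrite !size_cat Hs => /addIn.
by move/eqP: E; rewrite eqseq_cat // => /andP [/eqP -> /eqP ->].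
Qed.

Lemma S_finish (T : eqType) (x : T) L Rr ts' bs' :
  layered ts' bs' -> L ++ Rr = ts' ->
  exists H H' V, V != [::] /\ Sreach (L ++ x :: Rr, bs' ++ [:: x]) (H ++ V, H' ++ rev V).
Proof.
case=> [|U U' V HUU' HV].
  case: L => [|? ?] //; case: Rr => [|? ?] // _.
  by exists [::], [::], [:: x]; split=> //; apply: Sr_refl.
move=> E.
case: (eqVneq Rr [::]) => [->|Rrn].
  by exists L, (U' ++ rev V), [:: x]; split=> //; apply: Sr_refl.
case: (ltngtP (size Rr) (size V)) => Hsz.
- (* x inside V *)
  have [V1 [V2 [EV HV2]]] : exists V1 V2, V = V1 ++ V2 /\ size V2 = size Rr.
    exists (take (size V - size Rr) V), (drop (size V - size Rr) V).
    by rewrite cat_take_drop size_drop subKn // ltnW.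
  subst V; move: E; rewrite catA => /cat_eq_suffix /(_ (esym HV2)) [EL ER].
  have : V1 != [::] by case: (V1) Hsz => //=; rewrite HV2 ltnn.
  case/lastP: V1 EL Hsz HV => // V1' vp EL Hsz HV _.
  exists (x :: U ++ V1'), (rcons (rev V1') x ++ U'), (vp :: Rr); split=> //.
  apply: Sreach1.
  exists (U ++ V1'), [::], Rr, (U' ++ rev Rr), (rev V1'), [::], vp, x.
  split; congr pair.
  + by rewrite EL ER ; lnorm.
  + by rewrite ER rev_cat rev_rcons ; lnorm.
  + by lnorm.
  + by rewrite rev_cons ; lnorm.
- (* x before V, not adjacent *)
  case: Rr Rrn E Hsz => // u Rr' _ E /= Hsz.
  have [Q [V2 [EQ HV2]]] : exists Q V2, Rr' = Q ++ V2 /\ size V2 = size V.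
    exists (take (size Rr' - size V) Rr'), (drop (size Rr' - size V) Rr').
    by rewrite cat_take_drop size_drop subKn.
  rewrite EQ -cat_cons catA in E; case: (cat_eq_suffix E HV2) => EU EV2.
  have : u \in U' by rewrite -(perm_mem (layered_perm HUU')) -EU mem_cat inE eqxx orbT.
  case/mem_split_ex => U1 [U2 EU'].
  clear E; case/lastP: V HV HUU' EU EV2 HV2 Hsz => // V0 vk _ HUU' EU EV2 HV2 Hsz.
  have St1 : Sstep (L ++ x :: u :: Rr', (U' ++ rev (rcons V0 vk)) ++ [:: x])
                   (rcons (Q ++ V0) vk ++ rcons (rcons L x) u,
                    rcons U2 vk ++ rcons U1 u ++ rcons (rev V0) x).
    exists (rcons L x), (Q ++ V0), [::], U1, U2, (rcons (rev V0) x), u, vk.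
    split; congr pair.
    + by rewrite EQ EV2; lnorm.
    + by rewrite EU' rev_rcons ; lnorm.
    + by rewrite cats0.
  case/lastP: V0 St1 EV2 HV2 Hsz => [|V00 v'] St1 EV2 HV2 Hsz.
    exists (rcons Q vk ++ L), (rcons U2 vk ++ U1), [:: x; u]; split=> //.
    apply: Sreach1; move: St1; congr Sstep; congr pair.
    + by lnorm.
    + by lnorm.
  exists (rcons (vk :: L) x ++ Q ++ V00), (rcons (rev V00) x ++ rcons U2 vk ++ U1), [:: v'; u].
  split=> //.
  apply: Sr_step (Sreach1 St1) _.
  exists (Q ++ V00), (vk :: L), [:: u], (rcons U2 vk ++ rcons U1 u), (rev V00), [::], v', x.
  split; congr pair.
  + by lnorm.
  + by rewrite rev_rcons ; lnorm.
  + by lnorm.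
  + by rewrite cats0 ; lnorm.
- (* x adjacent before V *)
  move: E; move/cat_eq_suffix/(_ Hsz) => [-> ->].
  exists U, U', (x :: V); split=> //.
  by rewrite rev_cons -cats1 catA; apply: Sr_refl.
Qed.

Lemma filter_notin (T : eqType) (x : T) s : x \notin s -> filter (predC1 x) s = s.
Proof.
move=> Hx; apply/all_filterP/allP => y Hy /=; apply/eqP => E.
by move: Hx; rewrite -E Hy.
Qed.

Theorem S_layered (T : eqType) (n : nat) (t b : seq T) :
  size t <= n -> uniq t -> perm_eq t b ->
  exists t' b', Sreach (t, b) (t', b') /\ layered t' b'.
Proof.
elim: n t b => [|n IH] t b Hs Hu Hp.
  have Et : t = [::] by case: t Hs Hu Hp.
  subst t; have Eb : b = [::] by case: b Hp => // y b; rewrite perm_sym => /perm_size.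
  by subst b; exists [::], [::]; split; [apply: Sr_refl | apply: lay_nil].
case: (eqVneq t [::]) => [Et | Htn].
  subst t; have Eb : b = [::] by case: b Hp => // y b; rewrite perm_sym => /perm_size.
  by subst b; exists [::], [::]; split; [apply: Sr_refl | apply: lay_nil].
have Hbu : uniq b by rewrite -(perm_uniq Hp).
case/lastP: b Hp Hbu => [|bs x] Hp Hbu.
  by move: Htn; rewrite (perm_small_eq _ Hp) //.
have Hxt : x \in t by rewrite (perm_mem Hp) mem_rcons inE eqxx.
have Hxbs : x \notin bs by move: Hbu; rewrite rcons_uniq => /andP [].
set ts := filter (predC1 x) t.
have Hts : size ts <= n.
  rewrite /ts -rem_filter // size_rem //.
  by move: Hs; case: (size t).
have Htsu : uniq ts by rewrite filter_uniq.
have Htsp : perm_eq ts bs.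
  have := perm_filter (predC1 x) Hp.
  by rewrite filter_rcons /= eqxx /= (filter_notin Hxbs).
case: (IH _ _ Hts Htsu Htsp) => ts' [bs' [Hr Hl]].
case: (Sreach_lift_del Hr (erefl ts) Hxbs) => t' [Hft' Hr'].
have [Ptt' Pbb'] := Sreach_perm Hr'.
have Hxt' : x \in t' by rewrite -(perm_mem Ptt').
have Hut' : uniq t' by rewrite -(perm_uniq Ptt').
case: (mem_split_ex Hxt') => L [Rr Et'].
have HLR : L ++ Rr = ts'.
  rewrite -Hft' Et' filter_cat /= eqxx /=.
  have HxL : x \notin L.
    by move: Hut'; rewrite Et' cat_uniq => /and3P [_ /hasPn H _]; apply: H; rewrite inE eqxx.
  have HxR : x \notin Rr.
    by move: Hut'; rewrite Et' cat_uniq => /and3P [_ _ /= /andP []].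
  by rewrite !filter_notin.
case: (S_finish x Hl HLR) => H [H' [V [HV Hr2]]].
rewrite -Et' in Hr2.
have Hr3 := Sreach_trans (Sreach_trans Hr' Hr2) (Sr_refl _).
rewrite cats1 in Hr3.
have [P1 P2] := Sreach_perm Hr3.
have HHu : uniq (H ++ V) by rewrite -(perm_uniq P1).
have HHp : perm_eq H H'.
  rewrite -(perm_cat2r V).
  apply: (@perm_trans _ (H' ++ rev V)).
    by apply: perm_trans P2; apply: perm_trans Hp; rewrite perm_sym.
  by rewrite perm_cat2l perm_rev.
have HHs : size H <= n.
  have := perm_size P1; rewrite size_cat => E.
  have HV0 : 0 < size V by rewrite lt0n size_eq0.
  rewrite -ltnS; apply: leq_trans Hs; rewrite E -addn1 leq_add2l //.
have HHu' : uniq H by move: HHu; rewrite cat_uniq => /andP [].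
case: (IH _ _ HHs HHu' HHp) => H2 [H2' [Hr4 Hl4]].
exists (H2 ++ V), (H2' ++ rev V); split; last exact: lay_snoc.
exact: Sreach_trans Hr3 (Sreach_suffix V (rev V) Hr4).
Qed.


Definition pos {A : finType} (s : seq A) (a : A) : nat := (index a s).+1.
Definition mk {A : finType} (s0 s1 : seq A) : pairT A := (pos s0, pos s1).
Definition enumL {A : finType} (s : seq A) := perm_eq s (enum A).
Definition irrL {A : finType} (s0 s1 : seq A) :=
  forall k, 0 < k < #|A| -> ~ (take k s0 =i take k s1).
Definition good {A : finType} (s0 s1 : seq A) := [/\ enumL s0, enumL s1 & irrL s0 s1].
Definition Rch {A : finType} (p : pairT A) s0 s1 := in_rauzy_class p (mk s0 s1) /\ good s0 s1.
Definition RchE {A : finType} (e : bool) (p : pairT A) r q :=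
  if e then Rch p q r else Rch p r q.

Section Basics.
Context {A : finType}.
Implicit Types s r q : seq A.

Lemma enumL_uniq s : enumL s -> uniq s.
Proof. by move=> H; rewrite (perm_uniq H) enum_uniq. Qed.
Lemma enumL_size s : enumL s -> size s = #|A|.
Proof. by move=> H; rewrite (perm_size H) cardE. Qed.
Lemma enumL_mem s a : enumL s -> a \in s.
Proof. by move=> H; rewrite (perm_mem H) mem_enum. Qed.

Lemma irrL_sym s r : irrL s r -> irrL r s.
Proof. by move=> H k Hk E; apply: (H k Hk) => a; rewrite E. Qed.

Lemma is_bij_pos s : enumL s -> is_bij (pos s).
Proof.
move=> H; split.
- by move=> a; rewrite /pos /= -(enumL_size H) index_mem enumL_mem.
- by move=> a b; rewrite /pos => -[] E; apply: (index_inj a (enumL_mem a H) (enumL_mem b H) E).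
- move=> k /andP [H1 H2]; case: s H => [|a0 s'] H.
    by move: (enumL_size H) H2 => /= <-; case: k H1.
  exists (nth a0 (a0 :: s') k.-1); rewrite /pos index_uniq ?(enumL_uniq H) //.
    by case: k H1 {H2}.
  by rewrite (enumL_size H); case: k H1 H2.
Qed.

Lemma set_pos_take s k : enumL s ->
  [set a | 1 <= pos s a <= k] = [set a | a \in take k s].
Proof.
move=> H; apply/setP => a; rewrite !inE /pos /= in_take ?enumL_mem //.
Qed.

Lemma good_irreducible s r : good s r -> irreducible (mk s r).
Proof.
case=> Hs Hr Hi; split; first by split; apply: is_bij_pos.
move=> k Hk; rewrite /mk /= !set_pos_take //.
apply/negP => /eqP E; apply: (Hi k Hk) => a.
by move/setP: E => /(_ a); rewrite !inE.
Qed.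

Lemma irreducible_irrL s r : enumL s -> enumL r -> irreducible (mk s r) -> irrL s r.
Proof.
move=> Hs Hr [_ H] k Hk E; move: (H k Hk); rewrite /mk /= !set_pos_take //.
by move/eqP; apply; apply/setP => a; rewrite !inE E.
Qed.

Lemma index_rcons_last (r' : seq A) (z : A) : uniq (rcons r' z) -> index z (rcons r' z) = size r'.
Proof.
rewrite rcons_uniq => /andP [Hz _]; rewrite -cats1 index_cat (negbTE Hz) /=.
by rewrite eqxx addn0.
Qed.

Lemma index_mid (P : seq A) (z : A) (X : seq A) : z \notin P -> index z (P ++ z :: X) = size P.
Proof. by move=> Hz; rewrite index_cat (negbTE Hz) /= eqxx addn0. Qed.

End Basics.

Lemma uniq_cat_notin (T : eqType) (P X : seq T) x : uniq (P ++ X) -> x \in X -> x \notin P.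
Proof. by rewrite cat_uniq => /and3P [_ /hasPn H _] /H. Qed.

Lemma ar1 a c : (a + c.+1 < a.+1) = false.
Proof. apply/negbTE. rewrite -leqNgt. lia. Qed.
Lemma ar2 a c : (a + c.+1).+1 < a + c.+2 = false.
Proof. apply/negbTE. rewrite -leqNgt. lia. Qed.
Lemma ar3 a c d : c < d -> (a + c.+1).+1 < a + d.+2.
Proof. lia. Qed.

Section Move.
Context {A : finType}.

Lemma last_letter_eq (p : pairT A) e r (r' : seq A) z :
  row p e = pos r -> enumL r -> r = rcons r' z -> last_letter p e = Some z.
Proof.
move=> He Hr Er; have Hu := enumL_uniq Hr; rewrite Er in Hu.
rewrite /last_letter He; case: pickP => [a Ha | H].
  congr Some; move/eqP: Ha; rewrite /pos -(enumL_size Hr) Er size_rcons => -[] Ea.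
  have Ha : a \in rcons r' z by rewrite -Er enumL_mem.
  apply: (index_inj a Ha); first by rewrite mem_rcons inE eqxx.
  by rewrite index_rcons_last.
by move: (H z); rewrite /pos -(enumL_size Hr) Er index_rcons_last // size_rcons eqxx.
Qed.

Lemma rauzy_core (p : pairT A) e r q (r' : seq A) z P Q w :
  row p e = pos r -> row p (~~ e) = pos q -> enumL r -> enumL q ->
  r = rcons r' z -> q = P ++ z :: rcons Q w ->
  rauzy_row p e =1 pos (P ++ z :: w :: Q).
Proof.
move=> He Hne Hr Hq Er Eq b.
have Hu := enumL_uniq Hq; have Hsz := enumL_size Hq; have Hb := enumL_mem b Hq.
rewrite Eq in Hu Hsz Hb.
have HzP : z \notin P by apply: (uniq_cat_notin Hu); rewrite inE eqxx.
have HwP : w \notin P by apply: (uniq_cat_notin Hu); rewrite inE mem_rcons inE eqxx orbT.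
move: Hu; rewrite cat_uniq => /and3P [_ _]; rewrite /= rcons_uniq mem_rcons inE negb_or.
move=> /andP [/andP [Hzw HzQ] /andP [HwQ _]].
rewrite /rauzy_row (last_letter_eq He Hr Er) Hne /pos Eq.
rewrite (index_mid _ HzP).
rewrite size_cat /= size_rcons in Hsz.
rewrite -Hsz.
case: (boolP (b \in P)) => HbP.
  rewrite !index_cat HbP; have := index_mem b P; rewrite HbP => Hi.
  by rewrite ltnS ltnW.
rewrite !index_cat (negbTE HbP) /=.
case: (eqVneq z b) => [Ezb|Hzb]; first by rewrite /= addn0 ltnS leqnn.
case: (eqVneq w b) => [Ewb|Hwb].
  subst b.
  rewrite -cats1 index_cat (negbTE HwQ) /= eqxx addn0.
  by rewrite ar1 ar2 addn1.
have HbQ : b \in Q.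
  move: Hb; rewrite mem_cat (negbTE HbP) /= inE eq_sym (negbTE Hzb) /=.
  by rewrite mem_rcons inE eq_sym (negbTE Hwb).
rewrite -cats1 index_cat HbQ.
have := index_mem b Q; rewrite HbQ => Hi.
by rewrite ar1 (ar3 _ Hi) !addnS.
Qed.

End Move.

Section Move2.
Context {A : finType}.

Lemma take_mid (P X Y : seq A) z k : k <= (size P).+1 ->
  take k (P ++ z :: X) = take k (P ++ z :: Y).
Proof.
move=> Hk; rewrite -!cat_rcons !take_cat size_rcons; case: ifP => // /negbT.
rewrite -leqNgt => Hk2; have -> : k - (size P).+1 = 0.
  by apply/eqP; rewrite subn_eq0.
by rewrite !take0.
Qed.

Lemma irrL_move (r q : seq A) r' z P Q w :
  enumL r -> enumL q -> irrL r q -> r = rcons r' z -> q = P ++ z :: rcons Q w ->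
  irrL r (P ++ z :: w :: Q).
Proof.
move=> Hr Hq Hi Er Eq k Hk E.
have HzP : z \notin P.
  by apply: (@uniq_cat_notin _ P (z :: rcons Q w)); [rewrite -Eq enumL_uniq | rewrite inE eqxx].
case: (leqP k (size P).+1) => Hk'.
  by apply: (Hi k Hk) => a; rewrite E Eq (@take_mid P (w :: Q) (rcons Q w) z k Hk').
have H1 : z \in take k (P ++ [:: z, w & Q]).
  have Hzq : z \in P ++ [:: z, w & Q] by rewrite mem_cat inE eqxx orbT.
  by rewrite (in_take _ Hzq) index_mid // ltnW.
have Hu := enumL_uniq Hr; have Hs := enumL_size Hr.
rewrite Er in Hu Hs.
have H2 : z \notin take k r.
  rewrite Er in_take ?mem_rcons ?inE ?eqxx // index_rcons_last // -leqNgt.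
  move: Hs Hk; rewrite size_rcons => <- /andP [_]; by rewrite ltnS.
by move: H2; rewrite E H1.
Qed.

Lemma perm_mid (P Q : seq A) z w : perm_eq (P ++ z :: w :: Q) (P ++ z :: rcons Q w).
Proof. by rewrite perm_cat2l perm_cons perm_sym perm_rcons. Qed.

Lemma move_step e (p : pairT A) r' z P Q w :
  RchE e p (rcons r' z) (P ++ z :: rcons Q w) -> RchE e p (rcons r' z) (P ++ z :: w :: Q).
Proof.
case: e => -[Hc [H0 H1 H2]] /=.
- have Hirr := good_irreducible (And3 H0 H1 H2).
  have Hc' := rc_step true Hc Hirr.
  have E : rauzy true (mk (P ++ z :: rcons Q w) (rcons r' z)) = mk (P ++ z :: w :: Q) (rcons r' z).
    rewrite /rauzy /mk /=; congr pair; apply: functional_extensionality.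
    by apply: (@rauzy_core _ _ true _ _ r' z P Q w).
  rewrite E in Hc'; split=> //; split=> //.
    exact: perm_trans (perm_mid _ _ _ _) H0.
  by apply: irrL_sym; apply: (irrL_move H1 H0 (irrL_sym H2) erefl erefl).
- have Hirr := good_irreducible (And3 H0 H1 H2).
  have Hc' := rc_step false Hc Hirr.
  have E : rauzy false (mk (rcons r' z) (P ++ z :: rcons Q w)) = mk (rcons r' z) (P ++ z :: w :: Q).
    rewrite /rauzy /mk /=; congr pair; apply: functional_extensionality.
    by apply: (@rauzy_core _ _ false _ _ r' z P Q w).
  rewrite E in Hc'; split=> //; split=> //.
    exact: perm_trans (perm_mid _ _ _ _) H1.
  exact: (irrL_move H0 H1 H2 erefl erefl).
Qed.

Lemma rotL e (p : pairT A) r' z P Q1 Q2 :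
  RchE e p (rcons r' z) (P ++ z :: Q1 ++ Q2) -> RchE e p (rcons r' z) (P ++ z :: Q2 ++ Q1).
Proof.
elim/last_ind: Q2 Q1 => [|Q2 w IH] Q1; first by rewrite cats0.
rewrite -rcons_cat => /move_step H.
by rewrite cat_rcons; apply: (IH (w :: Q1)).
Qed.

Lemma rotL' e (p : pairT A) r q q' r' z P Q1 Q2 :
  RchE e p r q -> r = rcons r' z -> q = P ++ z :: Q1 ++ Q2 -> q' = P ++ z :: Q2 ++ Q1 ->
  RchE e p r q'.
Proof. by move=> H Er Eq Eq'; subst; apply: rotL. Qed.

End Move2.


Section Std.
Context {A : finType}.

Lemma split_index (s : seq A) x : x \in s ->
  s = take (index x s) s ++ x :: drop (index x s).+1 s.
Proof.
move=> H; rewrite -{1}(cat_take_drop (index x s) s) (drop_nth x) ?index_mem //.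
by rewrite nth_index.
Qed.

Lemma good_of (p : pairT A) s r : Rch p s r -> [/\ enumL s, enumL r & irrL s r].
Proof. by case. Qed.

Lemma zero_case (p : pairT A) t1 z b : Rch p (rcons t1 z) b -> index z b = 0 ->
  exists S, b = z :: S.
Proof.
move=> /good_of [_ Hb _]; have := enumL_mem z Hb.
case: b Hb => [|c S] //= _ _; case: eqP => // -> _; by exists S.
Qed.

Lemma descent (p : pairT A) : 2 <= #|A| -> forall m t1 z b,
  Rch p (rcons t1 z) b -> index z b <= m ->
  exists t2 z2 S, Rch p (rcons t2 z2) (z2 :: S).
Proof.
move=> HA; elim=> [|m IH] t1 z b HR Hi.
  move: Hi; rewrite leqn0 => /eqP Hi.
  by case: (zero_case HR Hi) => S E; subst b; exists t1, z, S.
case: (eqVneq (index z b) 0) => Hi0.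
  by case: (zero_case HR Hi0) => S E; subst b; exists t1, z, S.
have [Ht Hb Hirr] := good_of HR.
have Hzb : z \in b := enumL_mem z Hb.
set i := index z b.
have Hsb := enumL_size Hb; have Hst := enumL_size Ht.
have Hib : i < size b by rewrite index_mem.
have HsP : size (take i b) = i by rewrite size_take Hib.
have Hst' : size (take i (rcons t1 z)) = i.
  by rewrite size_take Hst -Hsb Hib.
have Hneq := Hirr i; rewrite lt0n Hi0 -Hsb Hib in Hneq.
have {}Hneq := Hneq isT.
have HuP : uniq (take i b) by rewrite take_uniq ?enumL_uniq.
have Hut : uniq (rcons t1 z) := enumL_uniq Ht.
have Hut' : uniq (take i (rcons t1 z)) by rewrite take_uniq.
have [y HyP Hyt] : exists2 y, y \in take i b & y \notin take i (rcons t1 z).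
  apply/(@allPn _ (fun y => y \in take i (rcons t1 z))); apply/negP => /allP Hsub.
  have [_ E] := uniq_min_size HuP Hsub (eq_leq (etrans Hst' (esym HsP))).
  by apply: Hneq => a; rewrite E.
have [w Hwt HwP] : exists2 w, w \in take i (rcons t1 z) & w \notin take i b.
  apply/(@allPn _ (fun y => y \in take i b)); apply/negP => /allP Hsub.
  have [_ E] := uniq_min_size Hut' Hsub (eq_leq (etrans HsP (esym Hst'))).
  by apply: Hneq => a; rewrite E.
have Hiwt : index w (rcons t1 z) < i by apply: index_ltn.
have Hiyt : i <= index y (rcons t1 z).
  by rewrite leqNgt -(in_take _ (enumL_mem y Ht)).
have Hizt : index z (rcons t1 z) = size t1 by rewrite index_rcons_last.
have Hwz : w != z.
  apply/eqP => E; move: Hiwt; rewrite E Hizt.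
  by move: Hst Hib; rewrite size_rcons Hsb => -> /=; rewrite ltnNge => /negbTE ->.
have Eb := split_index Hzb; rewrite -/i in Eb.
set P := take i b in Eb HyP HwP HsP; set S := drop i.+1 b in Eb.
have HwS : w \in S.
  by move: (enumL_mem w Hb); rewrite Eb mem_cat (negbTE HwP) inE (negbTE Hwz).
case: (mem_split_ex HwS) => S1 [S2 ES].
have HA1 : RchE false p (rcons t1 z) (P ++ z :: S2 ++ rcons S1 w).
  apply: (@rotL' _ false p (rcons t1 z) b _ t1 z P (rcons S1 w) S2) => //.
  by rewrite Eb ES cat_rcons.
have Hwt' : w \in rcons t1 z := enumL_mem w Ht.
case: (mem_split_ex Hwt') => T1 [T2 ET].
have HwT1 : w \notin T1 by apply: (uniq_cat_notin (P := T1) (X := w :: T2)); rewrite -?ET ?inE ?eqxx.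
have HyT2 : y \in T2.
  have Hyt' : y \in rcons t1 z := enumL_mem y Ht.
  move: Hyt'; rewrite ET mem_cat inE.
  case/orP => [HyT1|/orP [/eqP Eyw|] //].
    move: Hiyt Hiwt; rewrite ET !index_cat HyT1 (negbTE HwT1) /= eqxx addn0.
    have := index_mem y T1; rewrite HyT1 => H1 H2 H3.
    by move: (leq_trans H2 (ltnW H1)); rewrite leqNgt H3.
  by move: HwP; rewrite -Eyw HyP.
case: (mem_split_ex HyT2) => A1 [C ET2].
have Eb1 : rcons (P ++ z :: S2 ++ S1) w = P ++ z :: S2 ++ rcons S1 w.
  by rewrite rcons_cat rcons_cons rcons_cat.
have HB1 : RchE true p (rcons (P ++ z :: S2 ++ S1) w) (rcons t1 z).
  by rewrite /RchE /= Eb1.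
have HB2 : RchE true p (rcons (P ++ z :: S2 ++ S1) w) (T1 ++ w :: C ++ rcons A1 y).
  apply: (@rotL' _ true p _ (rcons t1 z) _ (P ++ z :: S2 ++ S1) w T1 (rcons A1 y) C) => //.
  by rewrite ET ET2 cat_rcons.
have HB3 : Rch p (rcons (T1 ++ w :: C ++ A1) y) (P ++ z :: S2 ++ rcons S1 w).
  have Et2 : T1 ++ w :: C ++ rcons A1 y = rcons (T1 ++ w :: C ++ A1) y.
    by rewrite rcons_cat rcons_cons rcons_cat.
  by move: HB2; rewrite /RchE Et2 Eb1.
apply: (IH _ _ _ HB3).
have HyP' : index y P < size P by rewrite index_mem.
rewrite index_cat HyP; move: HyP'; rewrite HsP -/i.
by move: Hi; rewrite -/i => H1 H2; rewrite -ltnS; apply: leq_trans H2 H1.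
Qed.

Lemma to_standard (p : pairT A) t1 z b : 2 <= #|A| -> Rch p (rcons t1 z) b ->
  exists a T z' B, Rch p (a :: rcons T z') (z' :: rcons B a).
Proof.
move=> HA HR.
have [t2 [z2 [S HR2]]] := descent HA HR (leqnn _).
have [Ht Hb _] := good_of HR2.
have Hst := enumL_size Ht.
case: t2 HR2 Ht Hst => [|a T] HR2 Ht Hst.
  by move: HA; rewrite -Hst.
have Hut := enumL_uniq Ht.
have Haz : a != z2.
  apply/eqP => E; move: Hut; rewrite rcons_cons /= mem_rcons inE E eqxx //.
have HaS : a \in S.
  by move: (enumL_mem a Hb); rewrite inE (negbTE Haz).
case: (mem_split_ex HaS) => S1 [S2 ES].
exists a, T, z2, (S2 ++ S1).
have H1 : RchE false p (rcons (a :: T) z2) ([::] ++ z2 :: S2 ++ rcons S1 a).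
  apply: (@rotL' _ false p _ (z2 :: S) _ (a :: T) z2 [::] (rcons S1 a) S2) => //.
  by rewrite ES cat_rcons.
by move: H1; rewrite /RchE /= rcons_cat.
Qed.

End Std.

Ltac lnorm2 := rewrite ?rev_cons ?rev_rcons ?rev_cat -?cats1 /=; do 5 (rewrite -?catA /=); rewrite ?cats0.

Section Macro.
Context {A : finType}.

Lemma Smacro (p : pairT A) a z T B T' B' :
  Rch p (a :: rcons T z) (z :: rcons B a) -> Sstep (T, B) (T', B') ->
  Rch p (a :: rcons T' z) (z :: rcons B' a).
Proof.
move=> H0 [X1 [Y1 [R1 [X2 [Y2 [R2 [w [v [E1 E2]]]]]]]]].
case: E1 => ET EB; case: E2 => ET' EB'; subst.
set t0 := a :: rcons (rcons X1 w ++ rcons Y1 v ++ R1) z.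
set q1 := z :: (rcons Y2 v ++ rcons R2 a) ++ rcons X2 w.
have HA : RchE false p t0 q1.
  apply: (@rotL' _ false p t0 (z :: rcons (rcons X2 w ++ rcons Y2 v ++ R2) a) q1
            (a :: rcons X1 w ++ rcons Y1 v ++ R1) z [::] (rcons X2 w) (rcons Y2 v ++ rcons R2 a)) => //;
    rewrite /t0 /q1; by lnorm2.
set t1 := (a :: X1) ++ w :: rcons R1 z ++ rcons Y1 v.
have HB : RchE true p q1 t1.
  apply: (@rotL' _ true p q1 t0 t1 (z :: rcons Y2 v ++ rcons R2 a ++ X2) w
            (a :: X1) (rcons Y1 v) (rcons R1 z)) => //;
    rewrite /t0 /q1 /t1; by lnorm2.
set q2 := (z :: Y2) ++ v :: rcons X2 w ++ rcons R2 a.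
have HC : RchE false p t1 q2.
  apply: (@rotL' _ false p t1 q1 q2 ((a :: X1) ++ w :: rcons R1 z ++ Y1) v
            (z :: Y2) (rcons R2 a) (rcons X2 w)) => //;
    rewrite /t1 /q1 /q2; by lnorm2.
set t2 := [::] ++ a :: rcons Y1 v ++ rcons X1 w ++ rcons R1 z.
have HD : RchE true p q2 t2.
  apply: (@rotL' _ true p q2 t1 t2 (z :: Y2 ++ v :: rcons X2 w ++ R2) a
            [::] (rcons X1 w ++ rcons R1 z) (rcons Y1 v)) => //;
    rewrite /t1 /q2 /t2; by lnorm2.
move: HD; rewrite /RchE /t2 /q2.
have -> : [::] ++ a :: rcons Y1 v ++ rcons X1 w ++ rcons R1 z =
          a :: rcons (rcons Y1 v ++ rcons X1 w ++ R1) z by lnorm2.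
by have -> : (z :: Y2) ++ v :: rcons X2 w ++ rcons R2 a =
          z :: rcons (rcons Y2 v ++ rcons X2 w ++ R2) a by lnorm2.
Qed.

Lemma Smacro_reach (p : pairT A) a z T B T' B' :
  Rch p (a :: rcons T z) (z :: rcons B a) -> Sreach (T, B) (T', B') ->
  Rch p (a :: rcons T' z) (z :: rcons B' a).
Proof.
move=> H0 H; move: H.
move Ex : (T, B) => x0; move Ey : (T', B') => y H.
elim: H T' B' Ey => [|[t1 b1] [t2 b2] H1 IH Hs] T' B' Ey.
  by subst; case: Ey => E1 E2; subst.
case: Ey => E1 E2; subst.
exact: Smacro (IH t1 b1 erefl) Hs.
Qed.

End Macro.


Lemma index_rev (T : eqType) (s : seq T) x : uniq s -> x \in s ->
  index x (rev s) + index x s = (size s).-1.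
Proof.
move=> Hu Hx; set i := index x s.
have Hi : i < size s by rewrite index_mem.
set j := size s - i.+1.
have Hj : j < size s by rewrite /j; lia.
have E : nth x (rev s) j = x.
  rewrite nth_rev // /j.
  have -> : size s - (size s - i.+1).+1 = i by lia.
  by rewrite nth_index.
rewrite -{1}E index_uniq ?size_rev ?rev_uniq // /j; lia.
Qed.


Lemma lay_blocks (X : eqType) (T B : seq X) : layered T B -> uniq T ->
  exists ks : seq nat,
    [/\ path ltn 2 ks, last 2 ks = (size T).+2,
        forall i, i < size ks -> nth 0 ks i <= (size T).+2 &
        forall i, i < size ks ->
          forall x, ((nth 0 (2 :: ks) i <= (index x T).+2 < nth 0 ks i) =
                     (nth 0 (2 :: ks) i <= (index x B).+2 < nth 0 ks i)) /\
                    (nth 0 (2 :: ks) i <= (index x T).+2 < nth 0 ks i ->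
                     (index x T).+2 + (index x B).+2 = nth 0 (2 :: ks) i + nth 0 ks i - 1)].
Proof.
elim=> [|T0 B0 V HL IH HV] Hu.
  by exists [::]; split.
have HuT0 : uniq T0 by move: Hu; rewrite cat_uniq => /andP [].
have HuV : uniq V by move: Hu; rewrite cat_uniq => /and3P [].
have [ks [Hp Hl Hle Hb]] := IH HuT0.
have Hperm := layered_perm HL.
have HsB : size B0 = size T0 by rewrite (perm_size Hperm).
have HV0 : 0 < size V by rewrite lt0n size_eq0.
exists (rcons ks (size (T0 ++ V)).+2); split.
- by rewrite rcons_path Hp /= Hl size_cat; lia.
- by rewrite last_rcons.
- move=> i; rewrite size_rcons ltnS nth_rcons leq_eqVlt.
  case/orP => [/eqP ->|Hi]; first by rewrite ltnn eqxx.
  by rewrite Hi size_cat; move: (Hle i Hi); lia.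
move=> i; rewrite size_rcons ltnS leq_eqVlt -rcons_cons.
case/orP => [/eqP Ei|Hi] x.
  rewrite Ei !nth_rcons /= ltnn eqxx ltnSn.
  have -> : nth 0 (2 :: ks) (size ks) = (size T0).+2.
    by have := nth_last 0 (2 :: ks); rewrite /= => ->.
  rewrite !index_cat -(perm_mem Hperm) !size_cat HsB.
  case: (boolP (x \in T0)) => HxT.
    have := index_mem x T0; rewrite HxT => H1.
    have := index_mem x B0; rewrite -(perm_mem Hperm) HxT HsB => H1'.
    by split; [apply/idP/idP; lia | lia].
  have Hr : x \in rev V = (x \in V) by rewrite mem_rev.
  case: (boolP (x \in V)) => HxV.
    have H1 := index_rev HuV HxV.
    have := index_mem x V; rewrite HxV => H2.
    have := index_mem x (rev V); rewrite Hr HxV size_rev => H3.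
    by split; [apply/idP/idP; lia | lia].
  have := index_mem x V; rewrite (negbTE HxV) => H2.
  have := index_mem x (rev V); rewrite Hr (negbTE HxV) size_rev => H3.
  have E2 : index x V = size V by apply/eqP; rewrite eqn_leq index_size /= leqNgt H2.
  have E3 : index x (rev V) = size V.
    apply/eqP; rewrite eqn_leq -{1}(size_rev V) index_size /= leqNgt H3 //.
  rewrite E2 E3; split; [apply/idP/idP; lia | lia].
have Hi' : i < size (2 :: ks) by rewrite /= ltnW.
rewrite !nth_rcons Hi Hi'.
have [Hb1 Hb2] := Hb i Hi x.
have Hle' := Hle i Hi.
rewrite !index_cat -(perm_mem Hperm).
case: (boolP (x \in T0)) => HxT; first by split.
have := index_mem x T0; rewrite (negbTE HxT) => H1.
have := index_mem x B0; rewrite -(perm_mem Hperm) (negbTE HxT) HsB => H2.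
by split; [apply/idP/idP; lia | lia].
Qed.

Section Final.
Context {A : finType}.

Lemma path_gt2 (ks : seq nat) : path ltn 2 ks -> forall j, j < size ks -> 2 < nth 0 ks j.
Proof.
move=> Hp j Hj; have := order_path_min ltn_trans Hp.
by move/all_nthP; apply.
Qed.

Lemma index_rcons_in (T : seq A) z x : x \in rcons T z -> z \notin T -> index x (rcons T z) = index x T.
Proof.
rewrite mem_rcons inE => Hx Hz; rewrite -cats1 index_cat.
case: ifP => // HxT; move: Hx; rewrite HxT orbF => /eqP ->.
by rewrite /= eqxx addn0 memNindex.
Qed.

Lemma final_pw (a z : A) T B :
  enumL (a :: rcons T z) -> enumL (z :: rcons B a) -> layered T B ->
  pw_order_reversing (mk (a :: rcons T z) (z :: rcons B a)).
Proof.
move=> Ht Hb HL.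
have Hut := enumL_uniq Ht; have Hub := enumL_uniq Hb.
have Hst := enumL_size Ht; have Hsb := enumL_size Hb.
move: Hst Hsb; rewrite /= !size_rcons => Hst Hsb.
have HaT : a \notin rcons T z by move: Hut => /= /andP [].
have HzB : z \notin rcons B a by move: Hub => /= /andP [].
have HzT : z \notin T by move: Hut => /= /andP [_]; rewrite rcons_uniq => /andP [].
have HaB : a \notin B by move: Hub => /= /andP [_]; rewrite rcons_uniq => /andP [].
have Haz : a != z by apply: contraNneq HaT => ->; rewrite mem_rcons inE eqxx.
have HuT : uniq T by move: Hut => /= /andP [_]; rewrite rcons_uniq => /andP [].
have Pt : forall x, pos (a :: rcons T z) x = if a == x then 1 else (index x T).+2.
  move=> x; rewrite /pos /=; case: eqP => // /eqP Hax.
  have Hx : x \in rcons T z.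
    by move: (enumL_mem x Ht); rewrite inE eq_sym (negbTE Hax).
  by rewrite index_rcons_in.
have Pb : forall x, pos (z :: rcons B a) x = if z == x then 1 else (index x B).+2.
  move=> x; rewrite /pos /=; case: eqP => // /eqP Hzx.
  have Hx : x \in rcons B a.
    by move: (enumL_mem x Hb); rewrite inE eq_sym (negbTE Hzx).
  by rewrite index_rcons_in.
have Ia : index a T = size T by apply: memNindex; apply: contra HaT; rewrite mem_rcons inE orbC => ->.
have Iz : index z B = size B by apply: memNindex; apply: contra HzB; rewrite mem_rcons inE orbC => ->.
have HsTB : size B = size T by apply: succn_inj; apply: succn_inj; rewrite Hst Hsb.
have Hza : (z == a) = false by rewrite eq_sym (negbTE Haz).
split.
  split.
    exists a; rewrite /mk /=.
    by split; [rewrite Pt eqxx | rewrite Pb Hza (memNindex HaB) Hsb].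
  exists z; rewrite /mk /=.
  by split; [rewrite Pb eqxx | rewrite Pt (negbTE Haz) (memNindex HzT) Hst].
have [ks [Hp Hl Hle Hblk]] := lay_blocks HL HuT.
exists ks; split=> //; first by rewrite Hl Hst.
move=> i Hi /=.
set lo := nth 0 (2 :: ks) i; set hi := nth 0 ks i.
have Hlo : 2 <= lo.
  rewrite /lo; case: i Hi {lo hi} => [|j] Hj //=.
  by apply: ltnW; apply: path_gt2 Hp j (ltnW Hj).
have Hhi : hi <= (size T).+2 := Hle i Hi.
have L1 : (lo <= 1) = false by apply/negbTE; rewrite -ltnNge.
have L2 : ((size T).+2 < hi) = false by apply/negbTE; rewrite -leqNgt.
have Et : forall x, (lo <= pos (a :: rcons T z) x < hi) = (lo <= (index x T).+2 < hi).
  by move=> x; rewrite Pt; case: eqP => [<-|_] //; rewrite Ia L1 L2 andbF.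
have Eb : forall x, (lo <= pos (z :: rcons B a) x < hi) = (lo <= (index x B).+2 < hi).
  by move=> x; rewrite Pb; case: eqP => [<-|_] //; rewrite Iz HsTB L1 L2 andbF.
split.
  apply/setP => x; rewrite !inE /mk /= Et Eb.
  by have [-> _] := Hblk i Hi x.
move=> x; rewrite /mk /= Et => Hx.
have [_ H2] := Hblk i Hi x.
have Hxa : a != x.
  by apply/eqP => E; move: Hx; rewrite -E Ia L2 andbF.
have Hxz : z != x.
  apply/eqP => E; have [H1 _] := Hblk i Hi x; move: Hx; rewrite H1 -E Iz HsTB L2 andbF //.
by rewrite Pt Pb (negbTE Hxa) (negbTE Hxz) H2.
Qed.

End Final.


Lemma bij_list (A : finType) (a0 : A) (f : A -> nat) : is_bij f ->
  exists s, enumL s /\ pos s =1 f.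
Proof.
case=> Hrange Hinj Hsurj.
pose g := fun k => odflt a0 [pick a | f a == k].
have Hg : forall k, 1 <= k <= #|A| -> f (g k) = k.
  move=> k Hk; rewrite /g; case: pickP => [a /eqP // | H].
  by case: (Hsurj k Hk) => a Ha; move: (H a); rewrite Ha eqxx.
have Hga : forall a, g (f a) = a by move=> a; apply: Hinj; apply: Hg; exact: Hrange.
pose s := [seq g k | k <- iota 1 #|A|].
have Hs : size s = #|A| by rewrite size_map size_iota.
have Hfa : forall a, (f a).-1 < #|A|.
  by move=> a; have /andP [H1 H2] := Hrange a; rewrite -ltnS prednK.
have Hnth : forall a, nth a0 s (f a).-1 = a.
  move=> a; have /andP [H1 H2] := Hrange a.
  rewrite (nth_map 0) ?size_iota // nth_iota // add1n prednK //.
have Hu : uniq s.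
  rewrite map_inj_in_uniq ?iota_uniq // => k1 k2; rewrite !mem_iota add1n ltnS => H1 H2 E.
  by rewrite -(Hg k1 H1) E Hg.
exists s; split.
  apply: uniq_perm => //; first exact: enum_uniq.
  by move=> a; rewrite mem_enum -(Hnth a) mem_nth // Hs.
move=> a; rewrite /pos -{1}(Hnth a) index_uniq ?Hs //.
by have /andP [H1 _] := Hrange a; rewrite prednK.
Qed.

Theorem theorem3p1 (A : finType) (p : pairT A) :
  2 <= #|A| -> irreducible p ->
  exists q, in_rauzy_class p q /\ pw_order_reversing q.
Proof.
move=> HA Hirr.
have /card_gt0P [a0 _] : 0 < #|A| by apply: leq_trans HA.
have Hirr0 := Hirr.
case: Hirr0 => [[Hb1 Hb2] _].
have [s0 [E0 P0]] := bij_list a0 Hb1; have [s1 [E1 P1]] := bij_list a0 Hb2.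
have Ep : p = mk s0 s1.
  case: p Hirr Hb1 Hb2 P0 P1 => f g /= _ _ _ P0 P1; rewrite /mk.
  by congr pair; apply: functional_extensionality => x; rewrite ?P0 ?P1.
have Hirr' : irreducible (mk s0 s1) by rewrite -Ep.
have HI := irreducible_irrL E0 E1 Hirr'.
have HR : Rch p s0 s1 by split; [rewrite -Ep; apply: rc_refl | split].
have Hs0 := enumL_size E0.
case/lastP: s0 E0 P0 Ep Hirr' HI HR Hs0 => [|t1 z] E0 P0 Ep Hirr' HI HR Hs0.
  by move: HA; rewrite -Hs0.
have [a [T [z' [B HR2]]]] := to_standard HA HR.
have [Ht Hb _] := good_of HR2.
have HuT : uniq T.
  by move: (enumL_uniq Ht) => /= /andP [_]; rewrite rcons_uniq => /andP [].
have HpTB : perm_eq T B.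
  have H1 : perm_eq (a :: rcons T z') (z' :: rcons B a).
    by have Hb0 := Hb; rewrite /enumL perm_sym in Hb0; exact: perm_trans Ht Hb0.
  have H2 : perm_eq (a :: rcons T z') (a :: z' :: T) by rewrite perm_cons perm_rcons.
  have H3 : perm_eq (z' :: rcons B a) (a :: z' :: B).
    apply: (@perm_trans _ (z' :: a :: B)); first by rewrite perm_cons perm_rcons.
    by rewrite -[z' :: a :: B]/([:: z'] ++ [:: a] ++ B) perm_catCA.
  have H4 : perm_eq (a :: z' :: T) (a :: z' :: B).
    by apply: perm_trans H3; apply: perm_trans H1; rewrite perm_sym.
  by move: H4; rewrite !perm_cons.
have [T' [B' [HS HL]]] := S_layered (leqnn (size T)) HuT HpTB.
have HR3 := Smacro_reach HR2 HS.
have [Ht' Hb' _] := good_of HR3.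
exists (mk (a :: rcons T' z') (z' :: rcons B' a)); split.
  by case: HR3.
exact: final_pw.
Qed.
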